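(* Let $n\ge 2$, $\lambda=(\lambda_1,\dots,\lambda_n)\in\mathbb{R}^n$, and let $x$ be a vertex of the tweaked Gelfand–Tsetlin polytope $\widetilde{GT}(\lambda)$. Then every coordinate of $x$ lies in the additive subgroup $\Gamma(\lambda)=\mathbb{Z}\lambda_1+\dots+\mathbb{Z}\lambda_n\subseteq\mathbb{R}$.
   Context: Tweaked patterns: with $y_{1,j}:=\lambda_j$, a tweaked Gelfand–Tsetlin pattern of type $\lambda$ is a real vector with the $n^2-2$ coordinates $y_{i,j}$ ($2\le i\le n$, $i\le j\le n$), $z_{i,j}$ ($1\le i\le n-2$, $i\le j\le n-2$), $z^\uparrow_{i,n-1},z^\downarrow_{i,n-1}$ ($1\le i\le n-2$), $z_{n-1,n-1}$, satisfying: (T1) for $1\le i\le n-2$, $i\le j\le n-2$: $z_{i,j}\le y_{i,j}$, $z_{i,j}\ge y_{i,j+1}$, $z_{i,j}\ge y_{i+1,j+1}$, and $z_{i,j}\le y_{i+1,j}$ if $j\ge i+1$; (T2) for $1\le i\le n-2$: $\max\{y_{i,n},y_{i+1,n}\}\le z^\uparrow_{i,n-1}\le y_{i,n-1}$, $z^\uparrow_{i,n-1}\le y_{i,n-1}+y_{i,n}+y_{i+1,n}$, $\max\{y_{i,n},y_{i+1,n}\}\le z^\downarrow_{i,n-1}\le y_{i+1,n-1}$, $z^\downarrow_{i,n-1}\le y_{i+1,n-1}+y_{i,n}+y_{i+1,n}$, and $y_{i,n-1}-y_{i+1,n-1}=z^\uparrow_{i,n-1}-z^\downarrow_{i,n-1}$;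 (T3) $\max\{y_{n-1,n},y_{n,n}\}\le z_{n-1,n-1}\le y_{n-1,n-1}$ and $z_{n-1,n-1}\le y_{n-1,n-1}+y_{n-1,n}+y_{n,n}$. $\widetilde{GT}(\lambda)\subseteq\mathbb{R}^{n^2-2}$ is the set of all tweaked patterns of type $\lambda$ (a polyhedron; the claim concerns its vertices). *)

(* Defs.v *)
From HB Require Import structures.
From mathcomp Require Import all_boot all_order all_algebra.
Set Implicit Arguments. Unset Strict Implicit. Unset Printing Implicit Defensive.
Import Order.TTheory GRing.Theory Num.Theory.
Local Open Scope ring_scope.

(* Labels of the coordinates of a tweaked Gelfand-Tsetlin pattern
   (indices are 1-based, as in the paper). *)
Inductive gtlabel :=
  | LY of nat & nat
  | LZ of nat & nat
  | LZu of nat            (* z^up_{i,n-1}, 1 <= i <= n-2 *)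
  | LZd of nat            (* z^down_{i,n-1}, 1 <= i <= n-2 *)
  | LZn.                  (* z_{n-1,n-1} *)

Definition gt_valid (n : nat) (l : gtlabel) : bool :=
  match l with
  | LY i j => [&& 2 <= i, i <= j & j <= n]%N
  | LZ i j => [&& 1 <= i, i <= j & j <= n - 2]%N
  | LZu i | LZd i => (1 <= i <= n - 2)%N
  | LZn => true
  end.

(* The n^2 - 2 coordinates. A point of R^{n^2-2} is a function gtcoord n -> R. *)
Definition gtcoord (n : nat) := {l : gtlabel | gt_valid n l}.

Section Pattern.
Variables (R : realFieldType) (n : nat) (lam : 'I_n -> R) (x : gtcoord n -> R).

(* value of coordinate l (0 for invalid labels, never used) *)
Definition gget (l : gtlabel) : R := odflt 0 (omap x (insub l : option (gtcoord n))).

(* lambda_j, 1-based *)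
Definition lamj (j : nat) : R := odflt 0 (omap lam (insub j.-1 : option 'I_n)).

Definition Y (i j : nat) : R := if i == 1%N then lamj j else gget (LY i j).
Definition Z (i j : nat) : R := gget (LZ i j).
Definition Zu (i : nat) : R := gget (LZu i).
Definition Zd (i : nat) : R := gget (LZd i).
Definition Zn : R := gget LZn.

Definition tweaked_GT_pattern : Prop :=
  (forall i j : nat, (1 <= i <= n - 2)%N -> (i <= j <= n - 2)%N ->
     [/\ Z i j <= Y i j, Z i j >= Y i j.+1, Z i j >= Y i.+1 j.+1
       & (i.+1 <= j)%N -> Z i j <= Y i.+1 j]) /\
  (forall i : nat, (1 <= i <= n - 2)%N ->
     [/\ Num.max (Y i n) (Y i.+1 n) <= Zu i, Zu i <= Y i n.-1
       & Zu i <= Y i n.-1 + Y i n + Y i.+1 n] /\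
     [/\ Num.max (Y i n) (Y i.+1 n) <= Zd i, Zd i <= Y i.+1 n.-1
       & Zd i <= Y i.+1 n.-1 + Y i n + Y i.+1 n] /\
     Y i n.-1 - Y i.+1 n.-1 = Zu i - Zd i) /\
  [/\ Num.max (Y n.-1 n) (Y n n) <= Zn, Zn <= Y n.-1 n.-1
    & Zn <= Y n.-1 n.-1 + Y n.-1 n + Y n n].

End Pattern.

Definition tweakedGT (R : realFieldType) (n : nat) (lam : 'I_n -> R)
  : (gtcoord n -> R) -> Prop := fun x => tweaked_GT_pattern lam x.

Definition is_vertex (R : realFieldType) (T : Type) (P : (T -> R) -> Prop)
  (x : T -> R) : Prop :=
  P x /\ forall (u v : T -> R) (t : R), P u -> P v -> 0 < t < 1 ->
    (forall c, x c = t * u c + (1 - t) * v c) -> forall c, u c = v c.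

Definition Gamma (R : realFieldType) (n : nat) (lam : 'I_n -> R) (r : R) : Prop :=
  exists k : 'I_n -> int, r = \sum_(i < n) lam i *~ k i.

(* Main.v *)
Require Import Defs.
From HB Require Import structures.
From mathcomp Require Import all_boot all_order all_algebra.
From mathcomp Require Import reals.
From mathcomp Require Import ring lra zify.
From Stdlib Require Import Classical.
Set Implicit Arguments. Unset Strict Implicit. Unset Printing Implicit Defensive.
Import Order.TTheory GRing.Theory Num.Theory.
Local Open Scope ring_scope.

Section Generic.
Variable R : realFieldType.

Definition smallP (P : R -> Prop) := exists2 eps : R, 0 < eps & forall e, `|e| <= eps -> P e.

Lemma smallP_mono (P Q : R -> Prop) : (forall e, P e -> Q e) -> smallP P -> smallP Q.
Proof. by move=> H [eps he hP]; exists eps => // e /hP /H. Qed.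

Lemma smallP_true (P : R -> Prop) : (forall e, P e) -> smallP P.
Proof. by move=> H; exists 1 => // e _; apply: H. Qed.

Lemma smallP_and (P Q : R -> Prop) : smallP P -> smallP Q -> smallP (fun e => P e /\ Q e).
Proof.
move=> [e1 he1 hP] [e2 he2 hQ]; exists (Num.min e1 e2); first by rewrite lt_min he1 he2.
by move=> e; rewrite le_min => /andP[h1 h2]; split; [apply: hP | apply: hQ].
Qed.

Lemma smallP_forall (N : nat) (P : nat -> R -> Prop) :
  (forall k, (k < N)%N -> smallP (P k)) -> smallP (fun e => forall k, (k < N)%N -> P k e).
Proof.
elim: N => [|N IH] H; first by apply: smallP_true.
have H1 : smallP (fun e => forall k, (k < N)%N -> P k e).
  by apply: IH => k hk; apply: H; apply: ltnW.
apply: smallP_mono (smallP_and H1 (H N (ltnSn N))).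
move=> e [h1 h2] k; rewrite ltnS leq_eqVlt => /orP[/eqP -> //|]; exact: h1.
Qed.

Lemma rowlin (a b da db : R) : a <= b -> (a = b -> da = db) ->
  smallP (fun e => a + e * da <= b + e * db).
Proof.
move=> hab ht; have [eab|neab] := eqVneq a b.
  by apply: smallP_true => e; rewrite -(ht eab) eab.
have lab : a < b by rewrite lt_neqAle neab hab.
have hpos : 0 < `|da - db| + 1 by apply: ltr_pwDr => //.
exists ((b - a) / (`|da - db| + 1)); first by apply: divr_gt0 => //; rewrite subr_gt0.
move=> e he.
have h1 : e * (da - db) <= `|e| * `|da - db|.
  by rewrite -normrM; apply: ler_norm.
have h2 : `|e| * `|da - db| <= (b - a) / (`|da - db| + 1) * `|da - db|.
  by apply: ler_wpM2r.
have h3 : (b - a) / (`|da - db| + 1) * `|da - db| <= b - a.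
  rewrite mulrAC ler_pdivrMr // ler_wpM2l //; first by rewrite subr_ge0.
  by rewrite lerDl.
have : e * (da - db) <= b - a by apply: le_trans h3; apply: le_trans h2.
by rewrite mulrBr; lra.
Qed.

End Generic.
Section Sg.
Variable R : realFieldType.
Variable t : R.
Hypothesis t0 : t != 0.

Definition sg (v : R) : R := if v == t then 1 else if v == - t then -1 else 0.

Lemma sgN v : sg (- v) = - sg v.
Proof.
have tnt : t != - t by apply/eqP => h; move/eqP: t0; apply; lra.
rewrite /sg; have [->|nvt] := eqVneq v t.
  by rewrite [- t == t]eq_sym (negbTE tnt) !eqxx.
have [->|nvnt] := eqVneq v (- t).
  by rewrite !opprK !eqxx.
have -> : (- v == t) = false by apply/eqP => h; move/eqP: nvnt; apply; lra.
have -> : (- v == - t) = false by apply/eqP => h; move/eqP: nvt; apply; lra.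
by rewrite oppr0.
Qed.

Lemma sg_sum0 a b : a + b = 0 -> sg a + sg b = 0.
Proof. move=> h; have -> : b = - a by lra.
by rewrite sgN addrN. Qed.

Definition dZu_f (Yi Yi' c c' zu zd : R) : R :=
  if [|| zu == Yi, zu == c | zu == c'] then sg zu
  else if (zd == c) || (zd == c') then sg zd + sg Yi - sg Yi'
  else if zu == Yi + c + c' then sg Yi + sg c + sg c'
  else sg zu.

Lemma block (Yi Yi' c c' zu zd : R) :
  Num.max c c' <= zu -> zu <= Yi -> zu <= Yi + c + c' ->
  Num.max c c' <= zd -> zd <= Yi' -> zd <= Yi' + c + c' -> Yi - Yi' = zu - zd ->
  smallP (fun e =>
   let du := dZu_f Yi Yi' c c' zu zd in let dd := du - sg Yi + sg Yi' in
   [/\ Num.max (c + e * sg c) (c' + e * sg c') <= zu + e * du,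
       zu + e * du <= Yi + e * sg Yi &
       zu + e * du <= (Yi + e * sg Yi) + (c + e * sg c) + (c' + e * sg c')] /\
   [/\ Num.max (c + e * sg c) (c' + e * sg c') <= zd + e * dd,
       zd + e * dd <= Yi' + e * sg Yi' &
       zd + e * dd <= (Yi' + e * sg Yi') + (c + e * sg c) + (c' + e * sg c')] /\
   (Yi + e * sg Yi) - (Yi' + e * sg Yi') = (zu + e * du) - (zd + e * dd)).
Proof.
rewrite !ge_max => /andP[r1 r2] r3 r4 /andP[r5 r6] r7 r8 E.
set du := dZu_f Yi Yi' c c' zu zd.
have T1 : c = zu -> sg c = du.
  move=> h; rewrite /du /dZu_f h eqxx !orbT //.
have T2 : c' = zu -> sg c' = du.
  move=> h; rewrite /du /dZu_f h eqxx !orbT //.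
have T3 : zu = Yi -> du = sg Yi.
  move=> h; rewrite /du /dZu_f h eqxx //.
have T4 : zu = Yi + c + c' -> du = sg Yi + sg c + sg c'.
  move=> h; rewrite /du /dZu_f.
  case: ifP => [/or3P[]/eqP h'|_].
  - have := @sg_sum0 c c'; rewrite -h'; lra.
  - have := @sg_sum0 Yi c'; rewrite -h'; lra.
  - have := @sg_sum0 Yi c; rewrite -h'; lra.
  case: ifP => [/orP[]/eqP h'|_]; last by rewrite h eqxx.
  - have := @sg_sum0 Yi' c'; rewrite -h'; lra.
  - have := @sg_sum0 Yi' c; rewrite -h'; lra.
set dd := du - sg Yi + sg Yi'.
have T5 : c = zd -> sg c = dd.
  move=> h; rewrite /dd /du /dZu_f; case: ifP => [/or3P[]/eqP h'|_].
  - have e1 : c = Yi' by lra.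
    by rewrite h' e1; ring.
  - have e1 : Yi' = Yi by lra.
    by rewrite h' e1; ring.
  - have e1 : c' = c by lra.
    have e2 : Yi' = Yi by lra.
    by rewrite h' e1 e2; ring.
  by rewrite -h eqxx /=; ring.
have T6 : c' = zd -> sg c' = dd.
  move=> h; rewrite /dd /du /dZu_f; case: ifP => [/or3P[]/eqP h'|_].
  - have e1 : c' = Yi' by lra.
    by rewrite h' e1; ring.
  - have e1 : c' = c by lra.
    have e2 : Yi' = Yi by lra.
    by rewrite h' e1 e2; ring.
  - have e1 : Yi' = Yi by lra.
    by rewrite h' e1; ring.
  by rewrite -h eqxx orbT /=; ring.
have T7 : zd = Yi' -> dd = sg Yi'.
  by move=> h; rewrite /dd T3; [ring | lra].
have T8 : zd = Yi' + c + c' -> dd = sg Yi' + sg c + sg c'.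
  by move=> h; rewrite /dd T4; [ring | lra].
have h1 := rowlin r1 T1.
have h2 := rowlin r2 T2.
have h3 := rowlin r3 T3.
have h4 := rowlin r4 T4.
have h5 := rowlin r5 T5.
have h6 := rowlin r6 T6.
have h7 := rowlin r7 T7.
have h8 := rowlin r8 T8.
have H := smallP_and h1 (smallP_and h2 (smallP_and h3 (smallP_and h4
   (smallP_and h5 (smallP_and h6 (smallP_and h7 h8)))))).
apply: smallP_mono H => e [g1 [g2 [g3 [g4 [g5 [g6 [g7 g8]]]]]]] /=.
have F1 : (Yi + e * sg Yi) + (c + e * sg c) + (c' + e * sg c') =
   (Yi + c + c') + e * (sg Yi + sg c + sg c') by ring.
have F2 : (Yi' + e * sg Yi') + (c + e * sg c) + (c' + e * sg c') =
   (Yi' + c + c') + e * (sg Yi' + sg c + sg c') by ring.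
rewrite !ge_max F1 F2 g1 g2 g3 g4 g5 g6 g7 g8; split => //; split => //.
apply/eqP; rewrite -subr_eq0.
have -> : Yi + e * sg Yi - (Yi' + e * sg Yi') - (zu + e * du - (zd + e * dd)) =
   Yi - Yi' - (zu - zd) by rewrite /dd; ring.
by rewrite E subrr.
Qed.
End Sg.

Section Gam.
Variables (R : realFieldType) (n : nat) (lam : 'I_n -> R).

Lemma Gamma0 : Gamma lam 0.
Proof. by exists (fun=> 0); rewrite big1 // => i _; rewrite mulr0z. Qed.

Lemma GammaD a b : Gamma lam a -> Gamma lam b -> Gamma lam (a + b).
Proof.
move=> [k1 ->] [k2 ->]; exists (fun i => k1 i + k2 i).
by rewrite -big_split; apply: eq_bigr => i _; rewrite mulrzDr.
Qed.

Lemma GammaN a : Gamma lam a -> Gamma lam (- a).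
Proof.
move=> [k1 ->]; exists (fun i => - k1 i).
by rewrite -sumrN; apply: eq_bigr => i _; rewrite mulrNz.
Qed.

Lemma GammaB a b : Gamma lam a -> Gamma lam b -> Gamma lam (a - b).
Proof. by move=> ha hb; apply: GammaD => //; apply: GammaN. Qed.

Lemma Gamma_lam i : Gamma lam (lam i).
Proof.
exists (fun j => (j == i)%:Z); rewrite (bigD1 i) //= eqxx mulr1z big1 ?addr0 //.
by move=> j /negbTE ->; rewrite mulr0z.
Qed.

Lemma Gamma_lamj j : Gamma lam (lamj lam j).
Proof. by rewrite /lamj; case: insubP => [u _ _|_] /=; [apply: Gamma_lam | apply: Gamma0]. Qed.

Lemma gget_lin (x d : gtcoord n -> R) e l :
  gget (fun c => x c + e * d c) l = gget x l + e * gget d l.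
Proof. by rewrite /gget; case: insubP => [u _ _|_] /=; rewrite ?mulr0 ?addr0. Qed.

Lemma gget_val (x : gtcoord n -> R) c : gget x (val c) = x c.
Proof. by rewrite /gget valK. Qed.

End Gam.

Definition isW (l : gtlabel) : bool :=
  match l with LY _ _ | LZ _ _ => true | _ => false end.

Section Pert.
Variables (R : realFieldType) (n : nat) (lam : 'I_n -> R) (x : gtcoord n -> R) (t : R).
Hypothesis tG : ~ Gamma lam t.

Lemma t0 : t != 0.
Proof. by apply/eqP => h; apply: tG; rewrite h; apply: Gamma0. Qed.

Lemma sg_Gamma v : Gamma lam v -> sg t v = 0.
Proof.
move=> hv; rewrite /sg; have [h|_] := eqVneq v t; first by case: tG; rewrite -h.
have [h|//] := eqVneq v (- t); case: tG; rewrite -(opprK t) -h; exact: GammaN.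
Qed.

Definition DU i := dZu_f t (Y lam x i n.-1) (Y lam x i.+1 n.-1) (Y lam x i n)
   (Y lam x i.+1 n) (Zu x i) (Zd x i).
Definition DN := dZu_f t (Y lam x n.-1 n.-1) (Y lam x n.-1 n.-1) (Y lam x n.-1 n)
   (Y lam x n n) (Zn x) (Zn x).

Definition dlab (c : gtcoord n) : R :=
  match val c with
  | LY _ _ | LZ _ _ => sg t (x c)
  | LZu i => DU i
  | LZd i => DU i - sg t (Y lam x i n.-1) + sg t (Y lam x i.+1 n.-1)
  | LZn => DN
  end.

Definition xe (e : R) := fun c => x c + e * dlab c.

Lemma gget_dW l : isW l -> gget dlab l = sg t (gget x l).
Proof.
move=> hW; rewrite /gget; case: insubP => [u _ hu|_] /=.
  by rewrite /dlab hu; move: hW; case: l hu.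
by rewrite sg_Gamma //; apply: Gamma0.
Qed.

Lemma Ype e i j : Y lam (xe e) i j = Y lam x i j + e * sg t (Y lam x i j).
Proof.
rewrite /Y; case: ifP => _.
  by rewrite sg_Gamma ?mulr0 ?addr0 //; apply: Gamma_lamj.
by rewrite /xe gget_lin gget_dW.
Qed.

Lemma Zpe e i j : Z (xe e) i j = Z x i j + e * sg t (Z x i j).
Proof. by rewrite /Z /xe gget_lin gget_dW. Qed.

Lemma gget_dv l (hv : gt_valid n l) : gget dlab l = dlab (exist _ l hv).
Proof. by rewrite /gget insubT. Qed.

Lemma Zupe e i : gt_valid n (LZu i) -> Zu (xe e) i = Zu x i + e * DU i.
Proof. by move=> hv; rewrite /Zu /xe gget_lin (gget_dv hv). Qed.

Lemma Zdpe e i : gt_valid n (LZd i) -> Zd (xe e) i =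
   Zd x i + e * (DU i - sg t (Y lam x i n.-1) + sg t (Y lam x i.+1 n.-1)).
Proof. by move=> hv; rewrite /Zd /xe gget_lin (gget_dv hv). Qed.

Lemma Znpe e : Zn (xe e) = Zn x + e * DN.
Proof. by rewrite /Zn /xe gget_lin (@gget_dv LZn isT). Qed.


Lemma feas : tweaked_GT_pattern lam x -> smallP (fun e => tweaked_GT_pattern lam (xe e)).
Proof.
move=> [H1 [H2 H3]].
have rowS a b : a <= b -> smallP (fun e => a + e * sg t a <= b + e * sg t b).
  by move=> h; apply: rowlin h _ => ->.
have S1 : smallP (fun e => forall i, (i < n)%N -> forall j, (j < n)%N ->
   (1 <= i <= n - 2)%N -> (i <= j <= n - 2)%N ->
   [/\ Z (xe e) i j <= Y lam (xe e) i j, Z (xe e) i j >= Y lam (xe e) i j.+1,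
       Z (xe e) i j >= Y lam (xe e) i.+1 j.+1
     & (i.+1 <= j)%N -> Z (xe e) i j <= Y lam (xe e) i.+1 j]).
  apply: smallP_forall => i _; apply: smallP_forall => j _.
  case hi: (1 <= i <= n - 2)%N; last by apply: smallP_true.
  case hj: (i <= j <= n - 2)%N; last by apply: smallP_true.
  have [a1 a2 a3 a4] := H1 i j hi hj.
  have S4 : smallP (fun e => (i.+1 <= j)%N -> Z x i j + e * sg t (Z x i j) <=
       Y lam x i.+1 j + e * sg t (Y lam x i.+1 j)).
    case hij: (i.+1 <= j)%N; last by apply: smallP_true.
    by apply: smallP_mono (rowS _ _ (a4 hij)) => e h _.
  apply: smallP_mono (smallP_and (rowS _ _ a1) (smallP_and (rowS _ _ a2)
     (smallP_and (rowS _ _ a3) S4))).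
  by move=> e [g1 [g2 [g3 g4]]] _ _; rewrite !Ype !Zpe; split.
have S2 : smallP (fun e => forall i, (i < n)%N -> (1 <= i <= n - 2)%N ->
     [/\ Num.max (Y lam (xe e) i n) (Y lam (xe e) i.+1 n) <= Zu (xe e) i,
         Zu (xe e) i <= Y lam (xe e) i n.-1
       & Zu (xe e) i <= Y lam (xe e) i n.-1 + Y lam (xe e) i n + Y lam (xe e) i.+1 n] /\
     [/\ Num.max (Y lam (xe e) i n) (Y lam (xe e) i.+1 n) <= Zd (xe e) i,
         Zd (xe e) i <= Y lam (xe e) i.+1 n.-1
       & Zd (xe e) i <= Y lam (xe e) i.+1 n.-1 + Y lam (xe e) i n + Y lam (xe e) i.+1 n] /\
     Y lam (xe e) i n.-1 - Y lam (xe e) i.+1 n.-1 = Zu (xe e) i - Zd (xe e) i).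
  apply: smallP_forall => i _.
  case hi: (1 <= i <= n - 2)%N; last by apply: smallP_true.
  have [[a1 a2 a3] [[a4 a5 a6] a7]] := H2 i hi.
  apply: smallP_mono (block t0 a1 a2 a3 a4 a5 a6 a7) => e /= h _.
  by rewrite !Ype Zupe ?Zdpe //; exact: h.
have S3 : smallP (fun e =>
     [/\ Num.max (Y lam (xe e) n.-1 n) (Y lam (xe e) n n) <= Zn (xe e),
         Zn (xe e) <= Y lam (xe e) n.-1 n.-1
       & Zn (xe e) <= Y lam (xe e) n.-1 n.-1 + Y lam (xe e) n.-1 n + Y lam (xe e) n n]).
  have [b1 b2 b3] := H3.
  have E : Y lam x n.-1 n.-1 - Y lam x n.-1 n.-1 = Zn x - Zn x by rewrite !subrr.
  apply: smallP_mono (block t0 b1 b2 b3 b1 b2 b3 E) => e /= [[g1 g2 g3] _].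
  by rewrite !Ype Znpe; split.
apply: smallP_mono (smallP_and S1 (smallP_and S2 S3)) => e [g1 [g2 g3]].
split; first by move=> i j hi hj; apply: g1 => //; lia.
split; first by move=> i hi; apply: g2 => //; lia.
exact: g3.
Qed.

Lemma key c1 : is_vertex (tweakedGT lam) x -> dlab c1 != 0 -> False.
Proof.
move=> [hP hV] hd.
have [eps he H] := feas hP.
have hu : tweakedGT lam (xe eps) by apply: H; rewrite ger0_norm // ltW.
have hv : tweakedGT lam (xe (- eps)) by apply: H; rewrite normrN ger0_norm // ltW.
have := hV _ _ (2^-1) hu hv.
have h2 : 0 < (2 : R)^-1 < 1.
  by rewrite invr_gt0 ltr0n /= invf_lt1 ?ltr0n // ltr1n.
move=> /(_ h2) hh.
have := hh _ c1; rewrite /xe => h.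
have : 2 * eps * dlab c1 = 0.
  have hc : forall c, x c = 2^-1 * (x c + eps * dlab c) + (1 - 2^-1) * (x c + - eps * dlab c).
    by move=> c; field.
  have E := h hc; rewrite mulNr in E; rewrite -mulrA; set p := eps * dlab c1 in E *.
  lra.
move/eqP; rewrite !mulf_eq0 (negbTE hd) pnatr_eq0 (gt_eqF he) /=.
by [].
Qed.
End Pert.

Lemma DU_one (R : realFieldType) (n : nat) (lam : 'I_n -> R) (Yi Yi' c c' zu zd : R) :
  Gamma lam Yi -> Gamma lam Yi' -> Gamma lam c -> Gamma lam c' -> ~ Gamma lam zu ->
  Yi - Yi' = zu - zd -> dZu_f zu Yi Yi' c c' zu zd = 1.
Proof.
move=> gY gY' gc gc' gz E; rewrite /dZu_f.
case: ifP => [/or3P[]/eqP h|_].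
- by case: gz; rewrite h.
- by case: gz; rewrite h.
- by case: gz; rewrite h.
case: ifP => [/orP[]/eqP h|_].
- case: gz; have -> : zu = c + (Yi - Yi') by lra.
  by apply: GammaD => //; apply: GammaB.
- case: gz; have -> : zu = c' + (Yi - Yi') by lra.
  by apply: GammaD => //; apply: GammaB.
case: ifP => [/eqP h|_].
  by case: gz; rewrite h; apply: GammaD => //; apply: GammaD.
by rewrite /sg eqxx.
Qed.


Theorem theorem7p8 (R : realType) (n : nat) (lam : 'I_n -> R)
  (x : gtcoord n -> R) :
  (2 <= n)%N -> is_vertex (tweakedGT lam) x ->
  forall c : gtcoord n, Gamma lam (x c).
Proof.
move=> hn hV c0; apply: NNPP => hc0.
have hP : tweaked_GT_pattern lam x by case: hV.
case: (classic (exists c, isW (val c) /\ ~ Gamma lam (x c))) => [[c [hW hG]]|hno].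
  apply: (@key _ _ _ _ _ hG c hV); rewrite /dlab; move: hW; case: (val c) => //= *;
  by rewrite /sg eqxx oner_neq0.
have GW : forall c, isW (val c) -> Gamma lam (x c).
  by move=> c hW; apply: NNPP => h; apply: hno; exists c.
have GY : forall i j, Gamma lam (Y lam x i j).
  move=> i j; rewrite /Y; case: ifP => _; first exact: Gamma_lamj.
  rewrite /gget; case: insubP => [u _ hu|_] /=; last exact: Gamma0.
  by apply: GW; rewrite hu.
have hnW : ~~ isW (val c0) by apply/negP => h; apply: hc0; apply: GW.
have hv0 := valP c0.
move: hnW hv0 (gget_val x c0).
case E: (val c0) => [i j|i j|i|i|] //= _ hv0 hg.
- have Ei : Y lam x i n.-1 - Y lam x i.+1 n.-1 = Zu x i - Zd x i.
    by have [_ [H2 _]] := hP; have [_ [_ Ei]] := H2 i hv0.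
  have tG : ~ Gamma lam (Zu x i) by rewrite /Zu hg.
  apply: (@key _ _ _ _ _ tG c0 hV).
  by rewrite /dlab E /DU (DU_one _ _ _ _ tG Ei) // oner_neq0.
- have Ei : Y lam x i n.-1 - Y lam x i.+1 n.-1 = Zu x i - Zd x i.
    by have [_ [H2 _]] := hP; have [_ [_ Ei]] := H2 i hv0.
  have tG : ~ Gamma lam (Zu x i).
    move=> h; apply: hc0; rewrite -hg -/(Zd x i).
    have -> : Zd x i = Zu x i - (Y lam x i n.-1 - Y lam x i.+1 n.-1) by lra.
    by apply: GammaB => //; apply: GammaB.
  pose c1 : gtcoord n := exist _ (LZu i) hv0.
  apply: (@key _ _ _ _ _ tG c1 hV).
  by rewrite /dlab /= /DU (DU_one _ _ _ _ tG Ei) // oner_neq0.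
- have Ei : Y lam x n.-1 n.-1 - Y lam x n.-1 n.-1 = Zn x - Zn x by rewrite !subrr.
  have tG : ~ Gamma lam (Zn x) by rewrite /Zn hg.
  apply: (@key _ _ _ _ _ tG c0 hV).
  by rewrite /dlab E /DN (DU_one _ _ _ _ tG Ei) // oner_neq0.
Qed.
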